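(* Let $X$ be a real normed space, $f:X\to\mathbb R\cup\{+\infty\}$ proper, $\bar x\in(\partial f)^{-1}(0)$, and $p,q\in(1,\infty)$ with $p^{-1}+q^{-1}=1$. Suppose the image $\mathrm{Im}\,\partial f=\bigcup_{x\in X}\partial f(x)$ is dense in $X^*$. Then the following are equivalent: (i) there exists $\gamma>0$ with $f(x)\ge f(\bar x)+\gamma\|x-\bar x\|^p$ for all $x\in X$; (ii) there exists $\kappa>0$ such that $\partial f$ is strongly $\frac qp$-subregular at $\bar x$ with parameters $\alpha=+\infty$ and $\kappa$, i.e. $\|x-\bar x\|\le\kappa\,d(0,\partial f(x))^{q/p}$ for all $x\in X$.
   Context: $\partial f(x):=\{\xi\in X^*: x\text{ is a global minimizer of } f-\langle\xi,\cdot\rangle\}$; $d(0,\partial f(x))=\inf\{\|\xi\|:\xi\in\partial f(x)\}$, equal to $+\infty$ if $\partial f(x)=\emptyset$. *)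

(* Defs.v *)
From HB Require Import structures.
From mathcomp Require Import all_boot all_order all_algebra.
From mathcomp Require Import all_classical all_reals all_analysis.
Set Implicit Arguments. Unset Strict Implicit. Unset Printing Implicit Defensive.
Import Order.TTheory GRing.Theory Num.Theory.
Import numFieldNormedType.Exports.
Local Open Scope classical_set_scope.
Local Open Scope ring_scope.

Section Defs.
Context {R : realType} {X : normedModType R}.

Definition dual_elt (xi : X -> R) : Prop :=
  (forall (a : R) (u v : X), xi (a *: u + v) = a * xi u + xi v) /\ continuous xi.

Definition dnorm (xi : X -> R) : \bar R :=
  ereal_sup [set (`|xi x|)%:E | x in [set x : X | `|x| <= 1]].

Definition proper_fun (f : X -> \bar R) : Prop :=
  (forall x, f x != -oo%E) /\ (exists x, f x != +oo%E).

(* Fenchel/Frechet-type global subdifferential: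
   xi ∈ ∂f(x) iff x is a global minimizer of f - <xi, .>. *)
Definition subdiff (f : X -> \bar R) (x : X) : set (X -> R) :=
  [set xi | dual_elt xi /\
     forall y, (f x - (xi x)%:E <= f y - (xi y)%:E)%E].

(* d(0, ∂f(x)) = inf of dual norms, +oo if ∂f(x) is empty. *)
Definition dist0_subdiff (f : X -> \bar R) (x : X) : \bar R :=
  ereal_inf [set dnorm xi | xi in subdiff f x].

Definition subdiff_image_dense (f : X -> \bar R) : Prop :=
  forall xi, dual_elt xi -> forall eps : R, 0 < eps ->
    exists x, exists2 eta, subdiff f x eta &
      (dnorm (fun y => (xi y - eta y)%R) < eps%:E)%E.

End Defs.

(* Main.v *)
Require Import Defs.
From HB Require Import structures.
From mathcomp Require Import all_boot all_order all_algebra.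
From mathcomp Require Import all_classical all_reals all_analysis.
From mathcomp Require Import ring lra.
Import Order.TTheory GRing.Theory Num.Theory.
Import numFieldNormedType.Exports.
Local Open Scope classical_set_scope.
Local Open Scope ring_scope.

Section HahnBanach.
Context {R : realType} {X : normedModType R}.

Definition goodG (A : set (X * R)) :=
  (forall a x y r s, A (x,r) -> A (y,s) -> A (a *: x + y, a * r + s)) /\
  (forall x r, A (x,r) -> r <= `|x|).

Lemma goodG0 (u : X) : goodG [set z | exists t, z = (t *: u, t * `|u|)].
Proof.
split.
  move=> a x y r s [t1 [-> ->]] [t2 [-> ->]]; exists (a * t1 + t2).
  by rewrite scalerDl scalerA mulrDl mulrA.
move=> x r [t [-> ->]]; rewrite normrZ ler_wpM2r //; exact: ler_norm.
Qed.

Lemma goodG_ext (G : set (X * R)) (x0 : X) :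
  goodG G -> G (0, 0) -> (forall r, ~ G (x0, r)) ->
  exists G', [/\ goodG G', G `<=` G' & exists r, G' (x0, r)].
Proof.
move=> [Gcl Gdom] G00 nx.
pose S := [set y | exists m r, G (m, r) /\ y = r - `|m - x0|].
have S0 : S !=set0 by exists (0 - `|0 - x0|); exists 0, 0.
have Sub : ubound S `|x0|.
  move=> y [m [r [Gmr ->]]]; have := Gdom _ _ Gmr.
  have := ler_normD (m - x0) x0; rewrite subrK; lra.
have hs : has_sup S by split => //; exists `|x0|.
pose c := sup S.
have hc1 : forall m r, G (m, r) -> r - `|m - x0| <= c.
  by move=> m r Gmr; apply: sup_upper_bound => //; exists m, r.
have hc2 : forall m r, G (m, r) -> c <= `|m + x0| - r.
  move=> m' r' Gm'r'; apply: ge_sup => // y [m [r [Gmr ->]]].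
  have := Gdom _ _ (Gcl 1 _ _ _ _ Gmr Gm'r'); rewrite scale1r mul1r => h.
  have : `|m + m'| <= `|m - x0| + `|m' + x0|.
    by have := ler_normD (m - x0) (m' + x0); rewrite addrACA addNr addr0.
  lra.
pose G' := [set z | exists m r t, G (m, r) /\ z = (m + t *: x0, r + t * c)].
exists G'; split.
- split.
    move=> a x y r s [m1 [r1 [t1 [G1 [-> ->]]]]] [m2 [r2 [t2 [G2 [-> ->]]]]].
    exists (a *: m1 + m2), (a * r1 + r2), (a * t1 + t2); split; first exact: Gcl.
    congr (_, _); last by ring.
    by rewrite scalerDr scalerA addrACA scalerDl.
  move=> x r [m [r0 [t [Gm [-> ->]]]]].
  have [t0|t0|->] := ltgtP t 0; last first.
  + by rewrite scale0r addr0 mul0r addr0; exact: Gdom.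
  + have ti : 0 < t^-1 by rewrite invr_gt0.
    have := hc2 _ _ (Gcl t^-1 _ _ _ _ Gm G00); rewrite !addr0.
    have -> : t^-1 *: m + x0 = t^-1 *: (m + t *: x0).
      by rewrite scalerDr scalerA mulVf ?gt_eqF // scale1r.
    rewrite normrZ gtr0_norm // => h.
    have := ler_wpM2l (ltW t0) h; rewrite mulrBr !mulrA divff ?gt_eqF // !mul1r.
    lra.
  + have ti : 0 < (- t)^-1 by rewrite invr_gt0 oppr_gt0.
    have := hc1 _ _ (Gcl (- t)^-1 _ _ _ _ Gm G00); rewrite !addr0.
    have -> : (- t)^-1 *: m - x0 = (- t)^-1 *: (m + t *: x0).
      by rewrite scalerDr scalerA invrN mulNr mulVf ?lt_eqF // scaleN1r.

    rewrite normrZ gtr0_norm // => h.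
    have t0' : 0 <= - t by rewrite oppr_ge0 ltW.
    have := ler_wpM2l t0' h; rewrite mulrBr !mulrA divff ?mul1r; last by rewrite oppr_eq0 lt_eqF.
    lra.
- move=> [m r] Gmr; exists m, r, 0; split => //.
  by rewrite scale0r addr0 mul0r addr0.
- exists c; exists 0, 0, 1; split => //.
  by rewrite scale1r add0r mul1r add0r.
Qed.

Lemma norming (u : X) : exists phi : X -> R,
  [/\ (forall a x y, phi (a *: x + y) = a * phi x + phi y),
      (forall x, `|phi x| <= `|x|) & phi u = `|u|].
Proof.
pose G0 := [set z | exists t, z = (t *: u, t * `|u|)].
have G0g := goodG0 u.
have : exists A, goodG (A `|` G0) /\ forall B, A `<` B -> ~ goodG (B `|` G0).
  apply: (Zorn_bigcup (P := fun A => goodG (A `|` G0))).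
  move=> F FP Ftot.
  have key : forall z1 z2, (\bigcup_(Y in F) Y `|` G0) z1 ->
      (\bigcup_(Y in F) Y `|` G0) z2 ->
      exists B, [/\ goodG (B `|` G0), B `<=` \bigcup_(Y in F) Y,
                    (B `|` G0) z1 & (B `|` G0) z2].
    move=> z1 z2 [[Y1 FY1 Y1z1]|G0z1] [[Y2 FY2 Y2z2]|G0z2].
    - have [Y12|Y21] := Ftot _ _ FY1 FY2.
      + exists Y2; split; [exact: FP|exact: bigcup_sup|left; exact: Y12|by left].
      + exists Y1; split; [exact: FP|exact: bigcup_sup|by left|left; exact: Y21].
    - by exists Y1; split; [exact: FP|exact: bigcup_sup|left|right].
    - by exists Y2; split; [exact: FP|exact: bigcup_sup|right|left].
    - exists set0; split; [by rewrite set0U|by []|by right|by right].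
  split.
    move=> a x y r s h1 h2; have [B [[Bcl _] BU B1 B2]] := key _ _ h1 h2.
    have := Bcl a _ _ _ _ B1 B2; case=> [/BU|]; [by left|by right].
  move=> x r h; have [B [[_ Bdom] _ B1 _]] := key _ _ h h; exact: Bdom.
move=> [A [PA maxA]].
set G := A `|` G0.
have [Gcl Gdom] := PA.
have G00 : G (0, 0) by right; exists 0; rewrite scale0r mul0r.
have Guniq : forall x r s, G (x, r) -> G (x, s) -> r = s.
  move=> x r s Gr Gs.
  have := Gdom _ _ (Gcl (-1) _ _ _ _ Gr Gs); have := Gdom _ _ (Gcl (-1) _ _ _ _ Gs Gr).
  rewrite scaleN1r addNr normr0; lra.
have tot : forall x, exists r, G (x, r).
  move=> x; have [//|nx] := pselect (exists r, G (x, r)); exfalso.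
  have [G' [G'g GG' [c G'c]]] := goodG_ext G x PA G00 (fun r h => nx (ex_intro _ r h)).
  apply: (maxA G').
    split; first by move=> z Az; apply: GG'; left.
    by move=> G'A; apply: nx; exists c; left; exact: G'A.
  have -> : G' `|` G0 = G'.
    by apply/setUidPl => z G0z; apply: GG'; right.
  exact: G'g.
pose phi x := projT1 (cid (tot x)).
have Gphi : forall x, G (x, phi x) by move=> x; rewrite /phi; case: cid.
exists phi; split.
- by move=> a x y; apply: (Guniq (a *: x + y)); [exact: Gphi|apply: Gcl; exact: Gphi].
- move=> x; rewrite ler_norml; apply/andP; split; last exact: Gdom _ _ (Gphi x).
  have := Gdom _ _ (Gphi (- x)); rewrite normrN.
  have -> : phi (- x) = - phi x.
    apply: (Guniq (- x)); first exact: Gphi.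
    have := Gcl (-1) _ _ _ _ (Gphi x) G00; rewrite scaleN1r addr0 mulN1r addr0.
    done.
  lra.
- apply: (Guniq u); first exact: Gphi.
  right; exists 1; by rewrite scale1r mul1r.
Qed.

End HahnBanach.

Section DN.
Context {R : realType} {X : normedModType R}.
Definition linf (phi : X -> R) := forall (a : R) (u v : X), phi (a *: u + v) = a * phi u + phi v.

Lemma lin0 (phi : X -> R) : linf phi -> phi 0 = 0.
Proof. move=> h; have := h 1 0 0; rewrite scale1r addr0 mul1r; lra. Qed.

Lemma linZ (phi : X -> R) a x : linf phi -> phi (a *: x) = a * phi x.
Proof. by move=> h; have := h a x 0; rewrite addr0 lin0 // addr0. Qed.

Lemma linD (phi : X -> R) x y : linf phi -> phi (x + y) = phi x + phi y.
Proof. by move=> h; have := h 1 x y; rewrite scale1r mul1r. Qed.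

Lemma linB (phi : X -> R) x y : linf phi -> phi (x - y) = phi x - phi y.
Proof. by move=> h; rewrite linD // -scaleN1r linZ // mulN1r. Qed.

Lemma dnorm_ge0 (phi : X -> R) : linf phi -> (0 <= dnorm phi)%E.
Proof.
move=> h; apply: ereal_sup_ubound; exists 0; last by rewrite lin0 // normr0.
by rewrite /= normr0.
Qed.

Lemma dnorm_le (phi : X -> R) c : (forall z : X, `|z| <= 1 -> `|phi z| <= c) -> (dnorm phi <= c%:E)%E.
Proof. by move=> h; apply: ge_ereal_sup => _ [z /= z1 <-]; rewrite lee_fin h. Qed.

Lemma dnorm_ball (phi : X -> R) z : `|z| <= 1 -> ((`|phi z|)%:E <= dnorm phi)%E.
Proof. by move=> z1; apply: ereal_sup_ubound; exists z. Qed.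

Lemma dnorm_bound (phi : X -> R) z : linf phi -> ((`|phi z|)%:E <= dnorm phi * (`|z|)%:E)%E.
Proof.
move=> h; have [->|z0] := eqVneq z 0.
  by rewrite lin0 // !normr0 mule0.
have nz : 0 < `|z| by rewrite normr_gt0.
have := @dnorm_ball phi (`|z|^-1 *: z).
rewrite normrZ normfV normr_id mulVf ?gt_eqF // lexx => /(_ isT).
rewrite linZ // normrM normfV normr_id.
move: (dnorm_ge0 phi h); case: (dnorm phi) => [d| |] //= d0.
  rewrite !lee_fin => hd; have := ler_wpM2r (ltW nz) hd.
  by rewrite mulrAC mulVf ?gt_eqF // mul1r.
by move=> _; rewrite gt0_mulye ?lte_fin // leey.
Qed.

Lemma lip_cont (phi : X -> R) k : 0 < k -> linf phi -> (forall z, `|phi z| <= k * `|z|) -> continuous phi.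
Proof.
move=> k0 h hk x; apply/cvgrPdist_lt => e e0.
have ek : 0 < e / k by rewrite divr_gt0.
have : \forall t \near x, `|x - t| < e / k by apply: cvgr_dist_lt => //; exact: cvg_id.
apply: filterS => t ht.
rewrite -linB //; apply: (le_lt_trans (hk _)).
by rewrite -ltr_pdivlMl // mulrC.
Qed.
End DN.

Section Helpers.
Context {R : realType} {X : normedModType R}.

Lemma sub_fin (f : X -> \bar R) x (eta : X -> R) x0 :
  (forall x, f x != -oo%E) -> f x0 != +oo%E -> subdiff f x eta ->
  exists s, f x = s%:E.
Proof.
move=> fnoo fx0 [_ h]; have := h x0; move: (fnoo x) (fnoo x0) fx0.
case: (f x) => [s| |]; case: (f x0) => [s0| |] //= _ _ _; try by exists s.
Qed.
End Helpers.

Theorem corollary4p3 (R : realType) (X : normedModType R)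
  (f : X -> \bar R) (xbar : X) (p q : R) :
  proper_fun f ->
  subdiff f xbar (fun _ => 0) ->
  1 < p -> 1 < q -> p^-1 + q^-1 = 1 ->
  subdiff_image_dense f ->
  (exists2 gamma : R, 0 < gamma &
     forall x : X, (f xbar + (gamma * (`|x - xbar| `^ p))%:E <= f x)%E)
  <->
  (exists2 kappa : R, 0 < kappa &
     forall x : X, ((`|x - xbar|)%:E <= kappa%:E * poweR (dist0_subdiff f x) (q / p))%E).
Proof.
move=> [fnoo [x0 fx0]] sub0 p1 q1 hpq dense.
have [_ h0] := sub0.
have p0 : 0 < p by lra.
have q0 : 0 < q by lra.
have pq : p + q = p * q.
  have e : p * q * (p^-1 + q^-1) = q + p by field; rewrite ?gt_eqF.
  by rewrite hpq mulr1 in e; rewrite e addrC.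
have qp : q / p = q - 1.
  rewrite -[q in q / p](_ : (q - 1) * p = q) ?mulfK ?gt_eqF //; nra.
have pq1 : (p - 1) * (q / p) = 1 by rewrite qp; nra.
have pq2 : (p - 1) * q = p by nra.
have pq3 : (p - 1) * (q - 1) = 1 by nra.
have hle : forall y, (f xbar <= f y)%E.
  by move=> y; have := h0 y; rewrite /= !sube0.
have [r fr] : exists r, f xbar = r%:E by exact: (@sub_fin _ _ f xbar _ x0 fnoo fx0 sub0).
split.
- move=> [gamma g0 H].
  have gq0 : 0 < gamma `^ (q / p) by rewrite powR_gt0.
  exists (gamma `^ (q / p))^-1; first by rewrite invr_gt0.
  move=> x.
  set w := `|x - xbar|.
  have w0 : 0 <= w by rewrite normr_ge0.
  have [wz|wpos] := eqVneq w 0.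
    rewrite wz; apply: mule_ge0; [by rewrite lee_fin invr_ge0 ltW | exact: poweR_ge0].
  have wgt : 0 < w by rewrite lt_def wpos w0.
  set a := gamma * w `^ (p - 1).
  have a0 : 0 <= a by apply: mulr_ge0; [exact: ltW | exact: powR_ge0].
  have ha : (a%:E <= dist0_subdiff f x)%E.
    apply: le_ereal_inf_tmp => _ [eta etasub <-].
    have [[lin _] heta] := etasub.
    have [s fs] := @sub_fin _ _ f x _ x0 fnoo fx0 etasub.
    have := heta xbar; have := H x; rewrite fr fs -!EFinB -EFinD !lee_fin => Hx hx.
    have e1 : gamma * w `^ p <= `|eta (x - xbar)|.
      rewrite (linB eta x xbar lin); have := ler_norm (eta x - eta xbar); lra.
    have e2 := dnorm_bound eta (x - xbar) lin.
    have e3 : ((a * w)%:E <= dnorm eta * w%:E)%E.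
      apply: le_trans e2; rewrite lee_fin /a -mulrA [w `^ _ * w]mulrC mulr_powRB1 //.
    move: e3 (dnorm_ge0 eta lin); case: (dnorm eta) => [d| |] //=.
      by rewrite -EFinM !lee_fin ler_pM2r // => ? _.
    by move=> _ _; rewrite leey.
  have hb := @gt0_ler_poweR _ (q / p) (ltW (divr_gt0 q0 p0)) a%:E (dist0_subdiff f x).
  have am : a%:E \in `[0%E, +oo%E] by rewrite in_itv /= lee_fin a0 leey.
  have dm : dist0_subdiff f x \in `[0%E, +oo%E].
    by rewrite in_itv /= leey andbT (le_trans _ ha) // lee_fin.
  have := hb am dm ha; rewrite poweR_EFin => hc.
  have ea : a `^ (q / p) = gamma `^ (q / p) * w.
    rewrite /a powRM; last 2 first. exact: ltW. exact: powR_ge0. by rewrite -(powRrM w) pq1 powRr1.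
  apply: le_trans (lee_wpmul2l _ hc); last by rewrite lee_fin invr_ge0 ltW.
  by rewrite -EFinM lee_fin ea mulrA mulVf ?gt_eqF // mul1r.
- move=> [kappa k0 H].
  pose K := (4 * kappa * 2 `^ q)^-1.
  have K0 : 0 < K by rewrite invr_gt0 !mulr_gt0 // powR_gt0.
  pose c := K `^ (p - 1).
  have c0 : 0 < c by rewrite powR_gt0.
  exists (c / 4); first by rewrite divr_gt0.
  move=> y.
  have w0 : 0 <= `|y - xbar| by rewrite normr_ge0.
  have [wz|wpos] := eqVneq `|y - xbar| 0.
    by rewrite wz powR0 ?gt_eqF // mulr0 adde0; exact: hle.
  have wgt : 0 < `|y - xbar| by rewrite lt_def wpos w0.
  set w := `|y - xbar| in w0 wpos wgt *.
  case Efy: (f y) => [s| |]; last by have := fnoo y; rewrite Efy.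
    2: by rewrite leey.
  have [phi [philin phib phiu]] := norming (y - xbar).
  pose t := c * w `^ (p - 1).
  have t0 : 0 < t by rewrite mulr_gt0 // powR_gt0.
  pose xi := fun z => t * phi z.
  have xilin : linf xi by move=> a z v; rewrite /xi philin; ring.
  have xib : forall z, `|xi z| <= t * `|z|.
    by move=> z; rewrite /xi normrM gtr0_norm // ler_wpM2l // ltW.
  have xid : dual_elt xi by split; [exact: xilin | exact: (lip_cont xi t t0 xilin xib)].
  have [x [eta etasub hd]] := dense xi xid (t / 2) (divr_gt0 t0 (ltr0Sn _ 1)).
  have [[etalin _] heta] := etasub.
  have dlin : linf (fun z => xi z - eta z) by move=> a z v; rewrite xilin etalin; ring.
  have hdb : forall z, `|z| <= 1 -> `|xi z - eta z| <= t / 2.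
    move=> z z1; have := le_lt_trans (dnorm_ball (fun z => xi z - eta z) z z1) hd.
    by rewrite lte_fin => /ltW.
  have hD : (dnorm eta <= (2 * t)%:E)%E.
    apply: dnorm_le => z z1.
    have := hdb z z1; have := xib z; have : t * `|z| <= t by nra.
    have := ler_normD (xi z) (- (xi z - eta z)).
    have -> : xi z + - (xi z - eta z) = eta z by rewrite opprB addrC subrK.
    rewrite normrN; lra.
  have D0 := dnorm_ge0 eta etalin.
  have [d Dd] : exists d, dnorm eta = d%:E.
    by move: hD D0; case: (dnorm eta) => [d| |] // _ _; exists d.
  rewrite Dd lee_fin in hD D0.
  have hdist : (dist0_subdiff f x <= d%:E)%E.
    by rewrite -Dd; apply: ereal_inf_lbound; exists eta.
  have dist0 : (0 <= dist0_subdiff f x)%E.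
    apply: le_ereal_inf_tmp => _ [e esub <-]; have [[elin _] _] := esub.
    exact: dnorm_ge0 e elin.
  have dm : dist0_subdiff f x \in `[0%E, +oo%E] by rewrite in_itv /= dist0 leey.
  have ddm : d%:E \in `[0%E, +oo%E] by rewrite in_itv /= leey andbT lee_fin.
  have hpw := @gt0_ler_poweR _ (q / p) (ltW (divr_gt0 q0 p0)) _ _ dm ddm hdist.
  rewrite poweR_EFin in hpw.
  have Hx' : `|x - xbar| <= kappa * d `^ (q / p).
    rewrite -lee_fin EFinM; apply: le_trans (H x) _; apply: lee_wpmul2l => //.
    by rewrite lee_fin ltW.
  have e1 : `|eta (x - xbar)| <= kappa * (2 * t) `^ q.
    have := dnorm_bound eta (x - xbar) etalin; rewrite Dd -EFinM lee_fin => h.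
    apply: (le_trans h).
    have h2 : d * `|x - xbar| <= d * (kappa * d `^ (q / p)) by rewrite ler_wpM2l.
    apply: (le_trans h2).
    rewrite mulrCA qp mulr_powRB1 //; apply: ler_wpM2l; first exact: ltW.
    apply: ge0_ler_powR => //; rewrite ?nnegrE; [exact: ltW|apply: mulr_ge0 => //; exact: ltW].
  have hdn : (dnorm (fun z => (xi z - eta z)%R) <= (t / 2)%:E)%E by apply: dnorm_le; exact: hdb.
  have e2 : `|xi (y - xbar) - eta (y - xbar)| <= t / 2 * w.
    have := le_trans (dnorm_bound _ (y - xbar) dlin) (lee_wpmul2r _ hdn).
    by rewrite -EFinM lee_fin => /(_ w0); rewrite lee_fin.
  have xiu : xi (y - xbar) = t * w by rewrite /xi phiu.
  have [fx fxE] := @sub_fin _ _ f x _ x0 fnoo fx0 etasub.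
  have hy := heta y; rewrite fxE Efy -!EFinB lee_fin in hy.
  have hx := hle x; rewrite fr fxE lee_fin in hx.
  have E1 : t * w = c * w `^ p.
    by rewrite /t -mulrA [w `^ _ * w]mulrC mulr_powRB1.
  have E2 : kappa * (2 * t) `^ q = c / 4 * w `^ p.
    have wp0 : 0 <= w `^ (p - 1) by exact: powR_ge0.
    rewrite /t (@powRM _ 2 (c * w `^ (p - 1)) q) //; last by rewrite mulr_ge0 // ltW.
    rewrite powRM //; last exact: ltW.
    rewrite -(powRrM w) pq2 -(mulr_powRB1 (ltW c0) q0) /c -(powRrM K) pq3 powRr1 ?ltW //.
    rewrite /K; field.
    by rewrite !gt_eqF // powR_gt0.
  have L1 := linB eta y xbar etalin.
  have L2 := linB eta x xbar etalin.
  have n1 := ler_norm (eta (x - xbar)).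
  have n2 := ler_norm (xi (y - xbar) - eta (y - xbar)).
  rewrite fr -EFinD lee_fin.
  lra.
Qed.
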